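(* Let $1\leq p <\infty$ and $f\in L^{p}(\mu)$. Then the set $\mathcal{O}_{f}:=\left\{\mathfrak{a}\in I : \int_{\mathcal{C}_{\mathfrak{a}}}|f|^{p} \ d\mu\neq 0 \right\}$ is countable and $$\sum_{\mathfrak{a}\in\mathcal{O}_{f}}\int_{\mathcal{C}_{\mathfrak{a}}}|f|^{p} \ d\mu =\int_{\mathcal{F}_{f}}|f|^{p} \ d\mu \leq \int_{\mathbb{R}^{\mathbb{N}}} |f|^{p} \ d\mu,$$ where $\mathcal{F}_{f}:= \bigsqcup_{\mathfrak{a}\in \mathcal{O}_{f}}\mathcal{C}_{\mathfrak{a}}$.
   Context: Let $\mathcal{B}$ be the Borel $\sigma$-algebra of $\mathbb{R}$, $\lambda$ the Lebesgue measure, and $\mathcal{B}_{\infty}$ the $\sigma$-algebra on $\mathbb{R}^{\mathbb{N}}$ generated by the cylinder sets $\prod_{i=1}^{m}C_{i}\times\prod_{i=m+1}^{\infty}\mathbb{R}$ with $C_i\in\mathcal{B}$, $m\in\mathbb{N}$. Let $\mathcal{F}(\mathcal{B},\lambda)$ be the set of finite rectangles $\prod_{i\in\mathbb{N}}C_{i}$ with $C_i\in\mathcal{B}$ and $\prod_{i}\lambda(C_i)\in[0,\infty)$, with $\mathrm{vol}(\prod_{i}C_i):=\prod_i\lambda(C_i)$. The measure $\mu$ is the restriction to $\mathcal{B}_{\infty}$ of the outer measure $\mu^{\ast}(A):=\inf\{\sum_{n}\mathrm{vol}(\mathscr{C}_{n}) : \mathscr{C}_{n}\in\mathcal{F}(\mathcal{B},\lambda),\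 A\subset\bigcup_{n}\mathscr{C}_{n}\}$ ($\inf\varnothing=\infty$). Let $I:=\mathbb{Z}^{\mathbb{N}}$ and, for $\mathfrak{a}=(a_n)_{n\in\mathbb{N}}\in I$, let $\mathcal{C}_{\mathfrak{a}}:=\prod_{n\in\mathbb{N}}[a_{n},a_{n}+1)$ (these unit cubes are pairwise disjoint, cover $\mathbb{R}^{\mathbb{N}}$, and have $\mu$-measure $1$). *)

(* Defs.v *)
From HB Require Import structures.
From mathcomp Require Import all_boot all_order all_algebra.
From mathcomp Require Import all_classical all_reals all_analysis.
Unset Printing Implicit Defensive.
Import Order.TTheory GRing.Theory Num.Theory numFieldNormedType.Exports.
Local Open Scope classical_set_scope.
Local Open Scope ring_scope.

Notation RN R := (nat -> R).

Definition cylinders (R : realType) : set (set (RN R)) :=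
  [set A | exists (m : nat) (C : nat -> set R),
     (forall i, measurable (C i)) /\
     A = [set x : RN R | forall i, (i < m)%N -> C i (x i)]].

Notation RNinf R := (g_sigma_algebraType (cylinders R)).

Definition rect (R : realType) (C : nat -> set R) : set (RN R) :=
  [set x | forall i, C i (x i)].

(* [finrect C v] : prod_i C_i is a finite rectangle (each C_i Borel, the
   infinite product prod_i lambda(C_i), i.e. the limit of the partial
   products, exists and lies in [0, oo)), and its volume is v. *)
Definition finrect (R : realType) (C : nat -> set R) (v : R) : Prop :=
  (forall i, measurable (C i)) /\
  ((fun n => (\prod_(i < n) (@lebesgue_measure R (C i)))%E) @ \oo --> v%:E).

Definition mu_star (R : realType) (A : set (RN R)) : \bar R :=
  ereal_inf [set s | exists (C : nat -> nat -> set R) (v : nat -> R),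
     (forall n, finrect R (C n) (v n)) /\
     A `<=` \bigcup_n rect R (C n) /\
     s = (\sum_(0 <= n <oo) (v n)%:E)%E].

Definition cube (R : realType) (a : nat -> int) : set (RN R) :=
  [set x | forall n, (a n)%:~R <= x n < (a n)%:~R + 1].

(* Main.v *)
Require Import Defs.
From HB Require Import structures.
From mathcomp Require Import all_boot all_order all_algebra.
From mathcomp Require Import all_classical all_reals all_analysis.
From mathcomp Require Import measurable_realfun.
Import Order.TTheory GRing.Theory Num.Theory numFieldNormedType.Exports.
Local Open Scope classical_set_scope.
Local Open Scope ring_scope.

Lemma int_le_aux {R : realType} {a b : int} {x : R} :
  a%:~R <= x -> x < b%:~R + 1 -> (a <= b)%R.
Proof.
move=> h1 h2; have : (a%:~R : R) < (b + 1)%:~R by rewrite intrD; exact: le_lt_trans h1 h2.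
by rewrite ltr_int ltzD1.
Qed.

Lemma cube_triv (R : realType) : trivIset setT (fun a => cube R a).
Proof.
move=> a b _ _ [x [ha hb]]; apply/funext => n.
have /andP[a1 a2] := ha n; have /andP[b1 b2] := hb n.
by apply/le_anti; rewrite (int_le_aux a1 b2) (int_le_aux b1 a2).
Qed.

Lemma cube_meas (R : realType) (a : nat -> int) :
  measurable (cube R a : set (RNinf R)).
Proof.
have -> : (cube R a : set (RNinf R)) = \bigcap_n
   [set x : RNinf R | forall i, (i < n)%N -> `[(a i)%:~R, (a i)%:~R + 1[%classic (x i)].
  apply/seteqP; split => x /=.
    by move=> hx n _ i _; rewrite /= in_itv /= hx.
  move=> hx n; have := hx n.+1 I n (ltnSn n); by rewrite /= in_itv.
apply: bigcapT_measurable => n; apply: sub_sigma_algebra.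
exists n, (fun i => `[(a i)%:~R, (a i)%:~R + 1[%classic); split => //.

Qed.

Lemma mulrn_le_aux (R : numDomainType) (x : R) m n :
  0 <= x -> (m <= n)%N -> x *+ m <= x *+ n.
Proof. by move=> x0 mn; rewrite -(subnK mn) mulrnDr lerDr mulrn_wge0. Qed.

Theorem theorem3p1 (R : realType)
  (mu : {measure set (RNinf R) -> \bar R})
  (hmu : forall A : set (RNinf R), measurable A -> mu A = mu_star R A)
  (p : R) (hp : 1 <= p)
  (f : RNinf R -> R)
  (hf : measurable_fun setT f)
  (hfp : (\int[mu]_x (`|f x| `^ p)%:E < +oo)%E) :
  let O := [set a : nat -> int |
              (\int[mu]_(x in cube R a) (`|f x| `^ p)%:E != 0)%E] in
  let F := \bigcup_(a in O) (cube R a : set (RNinf R)) in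
  countable O /\
  (\esum_(a in O) \int[mu]_(x in cube R a) (`|f x| `^ p)%:E
     = \int[mu]_(x in F) (`|f x| `^ p)%:E)%E /\
  (\int[mu]_(x in F) (`|f x| `^ p)%:E <= \int[mu]_x (`|f x| `^ p)%:E)%E.
Proof.
move=> O F.
have mg0 : measurable_fun [set: RNinf R] (fun x => `|f x| `^ p).
  apply: (measurableT_comp (measurable_powR _)).
  exact: measurableT_comp.
have mg : measurable_fun [set: RNinf R] (fun x => (`|f x| `^ p)%:E) by exact/measurable_EFinP.
have g0 x : (0 <= (`|f x| `^ p)%:E)%E by rewrite lee_fin powR_ge0.
pose c a := (\int[mu]_(x in cube R a) (`|f x| `^ p)%:E)%E.
have mc a : measurable (cube R a : set (RNinf R)) := cube_meas R a.
have c0 a : (0 <= c a)%E by apply: integral_ge0 => x _; exact: g0.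
have tot0 : (0 <= \int[mu]_x (`|f x| `^ p)%:E)%E by apply: integral_ge0 => x _; exact: g0.
have [r hr] : exists r : R, (\int[mu]_x (`|f x| `^ p)%:E = r%:E)%E.
  exists (fine (\int[mu]_x (`|f x| `^ p)%:E)); rewrite fineK //.
  by rewrite ge0_fin_numE.
have hsum (s : seq (nat -> int)) : uniq s -> (\sum_(a <- s) c a <= r%:E)%E.
  move=> us; rewrite -hr /c -(ge0_integral_bigsetU mu mc us).
  - apply: ge0_subset_integral => //.
    exact: bigsetU_measurable.
  - exact: sub_trivIset (cube_triv R).
  - exact: measurable_funS mg.
  - by move=> x _; exact: g0.
have cO : countable O.
  have Osub : O `<=` \bigcup_k [set a | ((k.+1%:R)^-1%:E < c a)%E].
    move=> a Oa; have : (0 < c a)%E by rewrite lt0e Oa c0.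
    case E: (c a) => [y| |] //.
    - move=> y0; rewrite lte_fin in y0.
      have [N _ HN] := near_infty_natSinv_lt (PosNum y0).
      exists N => //; rewrite /= E lte_fin; exact: (HN N (leqnn N)).
    - by move=> _; exists 0%N => //; rewrite /= E ltry.
  apply: sub_countable (subset_card_le Osub) _.
  apply: bigcup_countable; first exact: countableP.
  move=> k _; apply: finite_set_countable.
  case: (pselect (finite_set [set a | ((k.+1%:R)^-1%:E < c a)%E])) => // Hinf.
  have [B BOk Bn] := infinite_set_fset (k.+1 * Num.Def.archi_bound r)%N Hinf.
  have := hsum _ (finmap.fset_uniq B).
  set S := (X in (X <= _)%E -> _).
  have : (((k.+1%:R)^-1 *+ (k.+1 * Num.Def.archi_bound r))%:E <= S)%E.
    apply: (@le_trans _ _ (\sum_(i <- finmap.enum_fset B) ((k.+1%:R)^-1)%:E)%E).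
      rewrite sumEFin big_const_seq count_predT iter_addr_0 lee_fin.
      by apply: mulrn_le_aux; rewrite ?invr_ge0.
    rewrite /S [X in (_ <= X)%E]big_seq [X in (X <= _)%E]big_seq.
    by apply: lee_sum => a aB; apply/ltW; apply: BOk.
  move=> h1 h2; have := le_trans h1 h2; rewrite lee_fin.
  have r0 : 0 <= r by rewrite -lee_fin -hr.
  rewrite mulrnA -[_ *+ k.+1]mulr_natr mulVf ?pnatr_eq0 //.

  by rewrite leNgt (archi_boundP r0).
have /countable_injP [h hinj] := cO.
pose dflt := fun _ : nat => (fun _ : nat => 0%R : int).
pose e := pinv_ dflt O h.
pose Bs := h @` O.
have eB : e @` Bs = O := injpinv_image dflt hinj.
have [_ einj _] := injpinv_bij dflt hinj.
pose Fk k := if k \in Bs then (cube R (e k) : set (RNinf R)) else set0.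
have FE : F = \bigcup_k Fk k.
  rewrite /F -eB; apply/seteqP; split => x.
    case=> _ [k Bk <-] cx; exists k => //; rewrite /Fk ifT //; exact: mem_set.
  case=> k _; rewrite /Fk; case: ifPn => // /set_mem Bk cx.
  by exists (e k) => //; exists k.
have mFk k : measurable (Fk k) by rewrite /Fk; case: ifPn.
have mF : measurable F by rewrite FE; exact: bigcupT_measurable.
have tF : trivIset setT Fk.
  move=> i j _ _ [x []]; rewrite /Fk; case: ifPn => // /set_mem Bi.
  case: ifPn => // /set_mem Bj ci cj.
  apply: einj; [exact: mem_set | exact: mem_set |].
  by apply: (cube_triv R (e i) (e j)) => //; exists x.
split; first exact: cO.
split; last first.
  apply: ge0_subset_integral => //.
rewrite FE ge0_integral_bigcup //; last first.
  by apply: measurable_funS mg => //; exact: bigcupT_measurable.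
rewrite -eB esum_set_image //; last by move=> n _; exact: c0.
rewrite eseries_mkcond; apply: eq_eseriesr => k _.
rewrite /Fk; case: ifPn => // _; by rewrite integral_set0.
Qed.
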